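(* Let $n\leq 5$ be a positive integer, let $X_1,\ldots,X_n$ be independent Bernoulli random variables, $S=\sum_{i=1}^n X_i$, and let $Z$ be a Poisson random variable with mean $1$, independent of $S$. Assume that $S+Z$ has a unique mode $m_1$, and let $m_0$ be any mode of $S$. Then $m_1\leq m_0+1$.
   Context: A mode of a random variable $X$ taking values in $\{0,1,2,\ldots\}$ is any integer $m$ at which $k\mapsto\Pr(X=k)$ attains its maximum. The Bernoulli variables may have arbitrary (possibly different) success probabilities. *)

(* Defs.v *)
From Stdlib Require Import Reals Arith Factorial.
Open Scope R_scope.

(* Law of S = X_1 + ... + X_n for independent Bernoulli variables X_i with
   success probabilities p 0, ..., p (n-1): the pmf k |-> Pr(S = k),
   obtained by iterated convolution (adding one independent Bernoulli at a time). *)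
Fixpoint bern_sum_pmf (p : nat -> R) (n : nat) (k : nat) : R :=
  match n with
  | O => match k with O => 1 | S _ => 0 end
  | S n' => (1 - p n') * bern_sum_pmf p n' k
            + match k with O => 0 | S k' => p n' * bern_sum_pmf p n' k' end
  end.

Definition poisson1_pmf (j : nat) : R := exp (-1) / INR (fact j).

Definition bern_sum_poisson_pmf (p : nat -> R) (n : nat) (k : nat) : R :=
  sum_f_R0 (fun j => bern_sum_pmf p n j * poisson1_pmf (k - j)) k.

Definition is_mode (f : nat -> R) (m : nat) : Prop :=
  forall k : nat, f k <= f m.

Definition is_unique_mode (f : nat -> R) (m : nat) : Prop :=
  is_mode f m /\ forall m' : nat, is_mode f m' -> m' = m.

(* Main.v *)
Require Import Defs.
From Stdlib Require Import Reals Lra Lia Psatz Arith.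
Open Scope R_scope.
Open Scope R_scope.
Lemma sq_nonneg_sum : forall x y, 0 <= x -> 0 <= Rsqr y -> 0 <= x + Rsqr y.
Proof. intros; lra. Qed.

Lemma newton5_1 (q : nat -> R) :
  2 * bern_sum_pmf q 5 0 * bern_sum_pmf q 5 2 <= bern_sum_pmf q 5 1 * bern_sum_pmf q 5 1.
Proof.
  assert (H : 0 <= Rsqr ((q 0%nat)*(1 - q 1%nat)*(1 - q 2%nat)*(1 - q 3%nat)*(1 - q 4%nat)) + Rsqr ((q 1%nat)*(1 - q 0%nat)*(1 - q 2%nat)*(1 - q 3%nat)*(1 - q 4%nat)) + Rsqr ((q 2%nat)*(1 - q 0%nat)*(1 - q 1%nat)*(1 - q 3%nat)*(1 - q 4%nat)) + Rsqr ((q 3%nat)*(1 - q 0%nat)*(1 - q 1%nat)*(1 - q 2%nat)*(1 - q 4%nat)) + Rsqr ((q 4%nat)*(1 - q 0%nat)*(1 - q 1%nat)*(1 - q 2%nat)*(1 - q 3%nat))).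
  { repeat (apply Rle_0_sqr || apply Rplus_le_le_0_compat || apply Rmult_le_pos); lra. }
  cbn [bern_sum_pmf].
  match goal with |- ?L <= ?R => assert (E : R - L = Rsqr ((q 0%nat)*(1 - q 1%nat)*(1 - q 2%nat)*(1 - q 3%nat)*(1 - q 4%nat)) + Rsqr ((q 1%nat)*(1 - q 0%nat)*(1 - q 2%nat)*(1 - q 3%nat)*(1 - q 4%nat)) + Rsqr ((q 2%nat)*(1 - q 0%nat)*(1 - q 1%nat)*(1 - q 3%nat)*(1 - q 4%nat)) + Rsqr ((q 3%nat)*(1 - q 0%nat)*(1 - q 1%nat)*(1 - q 2%nat)*(1 - q 4%nat)) + Rsqr ((q 4%nat)*(1 - q 0%nat)*(1 - q 1%nat)*(1 - q 2%nat)*(1 - q 3%nat))) by (unfold Rsqr; ring) end.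
  lra.
Qed.

Lemma newton5_2 (q : nat -> R) :
  2 * bern_sum_pmf q 5 1 * bern_sum_pmf q 5 3 <= bern_sum_pmf q 5 2 * bern_sum_pmf q 5 2.
Proof.
  assert (H : 0 <= (Rsqr ((1 - q 0%nat)*((q 1%nat)*(q 2%nat)*(1 - q 3%nat)*(1 - q 4%nat) - (1 - q 1%nat)*(1 - q 2%nat)*(q 3%nat)*(q 4%nat))) + Rsqr ((1 - q 0%nat)*((q 1%nat)*(q 3%nat)*(1 - q 2%nat)*(1 - q 4%nat) - (1 - q 1%nat)*(1 - q 3%nat)*(q 2%nat)*(q 4%nat))) + Rsqr ((1 - q 0%nat)*((q 1%nat)*(q 4%nat)*(1 - q 2%nat)*(1 - q 3%nat) - (1 - q 1%nat)*(1 - q 4%nat)*(q 2%nat)*(q 3%nat))) + Rsqr ((1 - q 1%nat)*((q 0%nat)*(q 2%nat)*(1 - q 3%nat)*(1 - q 4%nat) - (1 - q 0%nat)*(1 - q 2%nat)*(q 3%nat)*(q 4%nat))) + Rsqr ((1 - q 1%nat)*((q 0%nat)*(q 3%nat)*(1 - q 2%nat)*(1 - q 4%nat) - (1 - q 0%nat)*(1 - q 3%nat)*(q 2%nat)*(q 4%nat))) + Rsqr ((1 - q 1%nat)*((q 0%nat)*(q 4%nat)*(1 - q 2%nat)*(1 - q 3%nat) - (1 - q 0%nat)*(1 - q 4%nat)*(q 2%nat)*(q 3%nat))) + Rsqr ((1 - q 2%nat)*((q 0%nat)*(q 1%nat)*(1 - q 3%nat)*(1 - q 4%nat) - (1 -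 q 0%nat)*(1 - q 1%nat)*(q 3%nat)*(q 4%nat))) + Rsqr ((1 - q 2%nat)*((q 0%nat)*(q 3%nat)*(1 - q 1%nat)*(1 - q 4%nat) - (1 - q 0%nat)*(1 - q 3%nat)*(q 1%nat)*(q 4%nat))) + Rsqr ((1 - q 2%nat)*((q 0%nat)*(q 4%nat)*(1 - q 1%nat)*(1 - q 3%nat) - (1 - q 0%nat)*(1 - q 4%nat)*(q 1%nat)*(q 3%nat))) + Rsqr ((1 - q 3%nat)*((q 0%nat)*(q 1%nat)*(1 - q 2%nat)*(1 - q 4%nat) - (1 - q 0%nat)*(1 - q 1%nat)*(q 2%nat)*(q 4%nat))) + Rsqr ((1 - q 3%nat)*((q 0%nat)*(q 2%nat)*(1 - q 1%nat)*(1 - q 4%nat) - (1 - q 0%nat)*(1 - q 2%nat)*(q 1%nat)*(q 4%nat))) + Rsqr ((1 - q 3%nat)*((q 0%nat)*(q 4%nat)*(1 - q 1%nat)*(1 - q 2%nat) - (1 - q 0%nat)*(1 - q 4%nat)*(q 1%nat)*(q 2%nat))) + Rsqr ((1 - q 4%nat)*((q 0%nat)*(q 1%nat)*(1 - q 2%nat)*(1 - q 3%nat) - (1 - q 0%nat)*(1 - q 1%nat)*(q 2%nat)*(q 3%nat))) + Rsqr ((1 - q 4%nat)*((q 0%nat)*(q 2%nat)*(1 - q 1%nat)*(1 - q 3%nat) - (1 - q 0%nat)*(1 - q 2%nat)*(q 1%nat)*(q 3%nat))) + Rsqr ((1 - q 4%nat)*((q 0%nat)*(q 3%nat)*(1 -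 q 1%nat)*(1 - q 2%nat) - (1 - q 0%nat)*(1 - q 3%nat)*(q 1%nat)*(q 2%nat))))).
  { repeat (apply Rle_0_sqr || apply Rplus_le_le_0_compat || apply Rmult_le_pos); lra. }
  cbn [bern_sum_pmf].
  match goal with |- ?L <= ?R => assert (E : 3*(R - L) = (Rsqr ((1 - q 0%nat)*((q 1%nat)*(q 2%nat)*(1 - q 3%nat)*(1 - q 4%nat) - (1 - q 1%nat)*(1 - q 2%nat)*(q 3%nat)*(q 4%nat))) + Rsqr ((1 - q 0%nat)*((q 1%nat)*(q 3%nat)*(1 - q 2%nat)*(1 - q 4%nat) - (1 - q 1%nat)*(1 - q 3%nat)*(q 2%nat)*(q 4%nat))) + Rsqr ((1 - q 0%nat)*((q 1%nat)*(q 4%nat)*(1 - q 2%nat)*(1 - q 3%nat) - (1 - q 1%nat)*(1 - q 4%nat)*(q 2%nat)*(q 3%nat))) + Rsqr ((1 - q 1%nat)*((q 0%nat)*(q 2%nat)*(1 - q 3%nat)*(1 - q 4%nat) - (1 - q 0%nat)*(1 - q 2%nat)*(q 3%nat)*(q 4%nat))) + Rsqr ((1 - q 1%nat)*((q 0%nat)*(q 3%nat)*(1 - q 2%nat)*(1 - q 4%nat) - (1 - q 0%nat)*(1 - q 3%nat)*(q 2%nat)*(q 4%nat))) + Rsqr ((1 - q 1%nat)*((q 0%nat)*(q 4%nat)*(1 - q 2%nat)*(1 - q 3%nat) - (1 - q 0%nat)*(1 - q 4%nat)*(q 2%nat)*(q 3%nat))) + Rsqr ((1 - q 2%nat)*((q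 0%nat)*(q 1%nat)*(1 - q 3%nat)*(1 - q 4%nat) - (1 - q 0%nat)*(1 - q 1%nat)*(q 3%nat)*(q 4%nat))) + Rsqr ((1 - q 2%nat)*((q 0%nat)*(q 3%nat)*(1 - q 1%nat)*(1 - q 4%nat) - (1 - q 0%nat)*(1 - q 3%nat)*(q 1%nat)*(q 4%nat))) + Rsqr ((1 - q 2%nat)*((q 0%nat)*(q 4%nat)*(1 - q 1%nat)*(1 - q 3%nat) - (1 - q 0%nat)*(1 - q 4%nat)*(q 1%nat)*(q 3%nat))) + Rsqr ((1 - q 3%nat)*((q 0%nat)*(q 1%nat)*(1 - q 2%nat)*(1 - q 4%nat) - (1 - q 0%nat)*(1 - q 1%nat)*(q 2%nat)*(q 4%nat))) + Rsqr ((1 - q 3%nat)*((q 0%nat)*(q 2%nat)*(1 - q 1%nat)*(1 - q 4%nat) - (1 - q 0%nat)*(1 - q 2%nat)*(q 1%nat)*(q 4%nat))) + Rsqr ((1 - q 3%nat)*((q 0%nat)*(q 4%nat)*(1 - q 1%nat)*(1 - q 2%nat) - (1 - q 0%nat)*(1 - q 4%nat)*(q 1%nat)*(q 2%nat))) + Rsqr ((1 - q 4%nat)*((q 0%nat)*(q 1%nat)*(1 - q 2%nat)*(1 - q 3%nat) - (1 - q 0%nat)*(1 - q 1%nat)*(q 2%nat)*(q 3%nat))) + Rsqr ((1 - q 4%nat)*((q 0%nat)*(q 2%nat)*(1 - q 1%nat)*(1 - q 3%nat) - (1 - q 0%nat)*(1 - q 2%nat)*(q 1%nat)*(q 3%nat)))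 + Rsqr ((1 - q 4%nat)*((q 0%nat)*(q 3%nat)*(1 - q 1%nat)*(1 - q 2%nat) - (1 - q 0%nat)*(1 - q 3%nat)*(q 1%nat)*(q 2%nat))))) by (unfold Rsqr; ring) end.
  lra.
Qed.

Lemma newton5_3 (q : nat -> R) :
  2 * bern_sum_pmf q 5 2 * bern_sum_pmf q 5 4 <= bern_sum_pmf q 5 3 * bern_sum_pmf q 5 3.
Proof.
  assert (H : 0 <= (Rsqr ((q 0%nat)*((1 - q 1%nat)*(1 - q 2%nat)*(q 3%nat)*(q 4%nat) - (q 1%nat)*(q 2%nat)*(1 - q 3%nat)*(1 - q 4%nat))) + Rsqr ((q 0%nat)*((1 - q 1%nat)*(1 - q 3%nat)*(q 2%nat)*(q 4%nat) - (q 1%nat)*(q 3%nat)*(1 - q 2%nat)*(1 - q 4%nat))) + Rsqr ((q 0%nat)*((1 - q 1%nat)*(1 - q 4%nat)*(q 2%nat)*(q 3%nat) - (q 1%nat)*(q 4%nat)*(1 - q 2%nat)*(1 - q 3%nat))) + Rsqr ((q 1%nat)*((1 - q 0%nat)*(1 - q 2%nat)*(q 3%nat)*(q 4%nat) - (q 0%nat)*(q 2%nat)*(1 - q 3%nat)*(1 - q 4%nat))) + Rsqr ((q 1%nat)*((1 - q 0%nat)*(1 - q 3%nat)*(q 2%nat)*(q 4%nat) - (q 0%nat)*(q 3%nat)*(1 - q 2%nat)*(1 - q 4%nat))) + Rsqr ((q 1%nat)*((1 - q 0%nat)*(1 - q 4%nat)*(q 2%nat)*(q 3%nat) - (q 0%nat)*(q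 4%nat)*(1 - q 2%nat)*(1 - q 3%nat))) + Rsqr ((q 2%nat)*((1 - q 0%nat)*(1 - q 1%nat)*(q 3%nat)*(q 4%nat) - (q 0%nat)*(q 1%nat)*(1 - q 3%nat)*(1 - q 4%nat))) + Rsqr ((q 2%nat)*((1 - q 0%nat)*(1 - q 3%nat)*(q 1%nat)*(q 4%nat) - (q 0%nat)*(q 3%nat)*(1 - q 1%nat)*(1 - q 4%nat))) + Rsqr ((q 2%nat)*((1 - q 0%nat)*(1 - q 4%nat)*(q 1%nat)*(q 3%nat) - (q 0%nat)*(q 4%nat)*(1 - q 1%nat)*(1 - q 3%nat))) + Rsqr ((q 3%nat)*((1 - q 0%nat)*(1 - q 1%nat)*(q 2%nat)*(q 4%nat) - (q 0%nat)*(q 1%nat)*(1 - q 2%nat)*(1 - q 4%nat))) + Rsqr ((q 3%nat)*((1 - q 0%nat)*(1 - q 2%nat)*(q 1%nat)*(q 4%nat) - (q 0%nat)*(q 2%nat)*(1 - q 1%nat)*(1 - q 4%nat))) + Rsqr ((q 3%nat)*((1 - q 0%nat)*(1 - q 4%nat)*(q 1%nat)*(q 2%nat) - (q 0%nat)*(q 4%nat)*(1 - q 1%nat)*(1 - q 2%nat))) + Rsqr ((q 4%nat)*((1 - q 0%nat)*(1 - q 1%nat)*(q 2%nat)*(q 3%nat) - (q 0%nat)*(q 1%nat)*(1 - q 2%nat)*(1 - q 3%nat))) + Rsqr ((q 4%nat)*((1 - q 0%nat)*(1 - q 2%nat)*(q 1%nat)*(q 3%nat) - (q 0%nat)*(q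 2%nat)*(1 - q 1%nat)*(1 - q 3%nat))) + Rsqr ((q 4%nat)*((1 - q 0%nat)*(1 - q 3%nat)*(q 1%nat)*(q 2%nat) - (q 0%nat)*(q 3%nat)*(1 - q 1%nat)*(1 - q 2%nat))))).
  { repeat (apply Rle_0_sqr || apply Rplus_le_le_0_compat || apply Rmult_le_pos); lra. }
  cbn [bern_sum_pmf].
  match goal with |- ?L <= ?R => assert (E : 3*(R - L) = (Rsqr ((q 0%nat)*((1 - q 1%nat)*(1 - q 2%nat)*(q 3%nat)*(q 4%nat) - (q 1%nat)*(q 2%nat)*(1 - q 3%nat)*(1 - q 4%nat))) + Rsqr ((q 0%nat)*((1 - q 1%nat)*(1 - q 3%nat)*(q 2%nat)*(q 4%nat) - (q 1%nat)*(q 3%nat)*(1 - q 2%nat)*(1 - q 4%nat))) + Rsqr ((q 0%nat)*((1 - q 1%nat)*(1 - q 4%nat)*(q 2%nat)*(q 3%nat) - (q 1%nat)*(q 4%nat)*(1 - q 2%nat)*(1 - q 3%nat))) + Rsqr ((q 1%nat)*((1 - q 0%nat)*(1 - q 2%nat)*(q 3%nat)*(q 4%nat) - (q 0%nat)*(q 2%nat)*(1 - q 3%nat)*(1 - q 4%nat))) + Rsqr ((q 1%nat)*((1 - q 0%nat)*(1 - q 3%nat)*(q 2%nat)*(q 4%nat) - (q 0%nat)*(q 3%nat)*(1 - q 2%nat)*(1 - q 4%nat))) + Rsqr ((q 1%nat)*((1 - q 0%nat)*(1 - q 4%nat)*(q 2%nat)*(q 3%nat) - (q 0%nat)*(q 4%nat)*(1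 - q 2%nat)*(1 - q 3%nat))) + Rsqr ((q 2%nat)*((1 - q 0%nat)*(1 - q 1%nat)*(q 3%nat)*(q 4%nat) - (q 0%nat)*(q 1%nat)*(1 - q 3%nat)*(1 - q 4%nat))) + Rsqr ((q 2%nat)*((1 - q 0%nat)*(1 - q 3%nat)*(q 1%nat)*(q 4%nat) - (q 0%nat)*(q 3%nat)*(1 - q 1%nat)*(1 - q 4%nat))) + Rsqr ((q 2%nat)*((1 - q 0%nat)*(1 - q 4%nat)*(q 1%nat)*(q 3%nat) - (q 0%nat)*(q 4%nat)*(1 - q 1%nat)*(1 - q 3%nat))) + Rsqr ((q 3%nat)*((1 - q 0%nat)*(1 - q 1%nat)*(q 2%nat)*(q 4%nat) - (q 0%nat)*(q 1%nat)*(1 - q 2%nat)*(1 - q 4%nat))) + Rsqr ((q 3%nat)*((1 - q 0%nat)*(1 - q 2%nat)*(q 1%nat)*(q 4%nat) - (q 0%nat)*(q 2%nat)*(1 - q 1%nat)*(1 - q 4%nat))) + Rsqr ((q 3%nat)*((1 - q 0%nat)*(1 - q 4%nat)*(q 1%nat)*(q 2%nat) - (q 0%nat)*(q 4%nat)*(1 - q 1%nat)*(1 - q 2%nat))) + Rsqr ((q 4%nat)*((1 - q 0%nat)*(1 - q 1%nat)*(q 2%nat)*(q 3%nat) - (q 0%nat)*(q 1%nat)*(1 - q 2%nat)*(1 - q 3%nat))) + Rsqr ((q 4%nat)*((1 - q 0%nat)*(1 - q 2%nat)*(q 1%nat)*(q 3%nat) - (q 0%nat)*(q 2%nat)*(1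 - q 1%nat)*(1 - q 3%nat))) + Rsqr ((q 4%nat)*((1 - q 0%nat)*(1 - q 3%nat)*(q 1%nat)*(q 2%nat) - (q 0%nat)*(q 3%nat)*(1 - q 1%nat)*(1 - q 2%nat))))) by (unfold Rsqr; ring) end.
  lra.
Qed.

Lemma newton5_4 (q : nat -> R) :
  2 * bern_sum_pmf q 5 3 * bern_sum_pmf q 5 5 <= bern_sum_pmf q 5 4 * bern_sum_pmf q 5 4.
Proof.
  assert (H : 0 <= Rsqr ((1 - q 0%nat)*(q 1%nat)*(q 2%nat)*(q 3%nat)*(q 4%nat)) + Rsqr ((1 - q 1%nat)*(q 0%nat)*(q 2%nat)*(q 3%nat)*(q 4%nat)) + Rsqr ((1 - q 2%nat)*(q 0%nat)*(q 1%nat)*(q 3%nat)*(q 4%nat)) + Rsqr ((1 - q 3%nat)*(q 0%nat)*(q 1%nat)*(q 2%nat)*(q 4%nat)) + Rsqr ((1 - q 4%nat)*(q 0%nat)*(q 1%nat)*(q 2%nat)*(q 3%nat))).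
  { repeat (apply Rle_0_sqr || apply Rplus_le_le_0_compat || apply Rmult_le_pos); lra. }
  cbn [bern_sum_pmf].
  match goal with |- ?L <= ?R => assert (E : R - L = Rsqr ((1 - q 0%nat)*(q 1%nat)*(q 2%nat)*(q 3%nat)*(q 4%nat)) + Rsqr ((1 - q 1%nat)*(q 0%nat)*(q 2%nat)*(q 3%nat)*(q 4%nat)) + Rsqr ((1 - q 2%nat)*(q 0%nat)*(q 1%nat)*(q 3%nat)*(q 4%nat)) + Rsqr ((1 - q 3%nat)*(q 0%nat)*(q 1%nat)*(q 2%nat)*(q 4%nat)) + Rsqr ((1 - q 4%nat)*(q 0%nat)*(q 1%nat)*(q 2%nat)*(q 3%nat))) by (unfold Rsqr; ring) end.
  lra.
Qed.

Lemma bsp_zero p n : forall k, (n < k)%nat -> bern_sum_pmf p n k = 0.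
Proof.
  induction n as [|n IH]; intros k Hk; simpl.
  - destruct k; [lia|reflexivity].
  - destruct k as [|k]; [lia|]. rewrite (IH (S k)) by lia. rewrite (IH k) by lia. ring.
Qed.

Lemma newton5 (q : nat -> R) k : (1 <= k)%nat ->
  2 * bern_sum_pmf q 5 (k-1) * bern_sum_pmf q 5 (S k) <= bern_sum_pmf q 5 k * bern_sum_pmf q 5 k.
Proof.
  intros Hk.
  destruct k as [|[|[|[|[|k]]]]]; try lia.
  - apply newton5_1.
  - apply newton5_2.
  - apply newton5_3.
  - apply newton5_4.
  - rewrite (bsp_zero q 5 (S (S (S (S (S (S k))))))) by lia.
    rewrite Rmult_0_r. rewrite <- Rsqr_def. apply Rle_0_sqr.
Qed.

Definition padp (p : nat -> R) (n : nat) (i : nat) : R := if (i <? n)%nat then p i else 0.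

Lemma pad_eq1 p n : forall m, (m <= n)%nat -> forall k,
  bern_sum_pmf (padp p n) m k = bern_sum_pmf p m k.
Proof.
  induction m as [|m IH]; intros Hm k; cbn [bern_sum_pmf]. reflexivity.
  assert (E : padp p n m = p m).
  { unfold padp. rewrite (proj2 (Nat.ltb_lt m n)) by lia. reflexivity. }
  rewrite E. destruct k; rewrite !IH by lia; reflexivity.
Qed.

Lemma pad_eq2 p n : forall d k,
  bern_sum_pmf (padp p n) (n + d) k = bern_sum_pmf (padp p n) n k.
Proof.
  induction d as [|d IH]; intros k. now rewrite Nat.add_0_r.
  rewrite Nat.add_succ_r. cbn [bern_sum_pmf].
  assert (E : padp p n (n + d) = 0).
  { unfold padp. rewrite (proj2 (Nat.ltb_ge (n + d) n)) by lia. reflexivity. }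
  rewrite E. destruct k; rewrite IH; ring.
Qed.

Lemma pad5 p n k : (n <= 5)%nat -> bern_sum_pmf p n k = bern_sum_pmf (padp p n) 5 k.
Proof.
  intros Hn. replace 5%nat with (n + (5 - n))%nat by lia.
  rewrite pad_eq2, pad_eq1 by lia. reflexivity.
Qed.

Lemma newton_bsp p n k : (n <= 5)%nat -> (1 <= k)%nat ->
  2 * bern_sum_pmf p n (k-1) * bern_sum_pmf p n (S k) <= bern_sum_pmf p n k * bern_sum_pmf p n k.
Proof.
  intros Hn Hk. rewrite !(pad5 p n) by exact Hn. now apply newton5.
Qed.

Lemma bsp_nonneg p n : (forall i, (i<n)%nat -> 0 <= p i <= 1) -> forall k, 0 <= bern_sum_pmf p n k.
Proof.
  induction n as [|n IH]; intros Hp k; cbn [bern_sum_pmf].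
  - destruct k; lra.
  - assert (H1 := Hp n (Nat.lt_succ_diag_r n)).
    assert (IH' : forall k, 0 <= bern_sum_pmf p n k) by (apply IH; intros; apply Hp; lia).
    destruct k.
    + pose proof (IH' 0%nat). nra.
    + pose proof (IH' (S k)); pose proof (IH' k). nra.
Qed.

Lemma bsp_support p n : (forall i, (i<n)%nat -> 0 <= p i <= 1) ->
  forall k, 0 < bern_sum_pmf p n k -> bern_sum_pmf p n (S k) = 0 ->
  forall j, (k < j)%nat -> bern_sum_pmf p n j = 0.
Proof.
  induction n as [|n IH]; intros Hp k Hk Hk1 j Hj.
  - cbn [bern_sum_pmf] in Hk. destruct k; [|lra]. destruct j; [lia|reflexivity].
  - assert (H1 := Hp n (Nat.lt_succ_diag_r n)).
    assert (Hp' : forall i, (i<n)%nat -> 0 <= p i <= 1) by (intros; apply Hp; lia).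
    pose proof (bsp_nonneg p n Hp') as Hnn.
    specialize (IH Hp').
    cbn [bern_sum_pmf] in Hk, Hk1 |- *.
    destruct j as [|j]; [lia|].
    set (P := p n) in *.
    pose proof (Hnn k). pose proof (Hnn (S k)).
    assert (A1 : (1 - P) * bern_sum_pmf p n (S k) = 0) by nra.
    assert (A2 : P * bern_sum_pmf p n k = 0) by nra.
    destruct (Req_dec P 0) as [P0|P0].
    + rewrite P0 in *.
      assert (Bk : 0 < bern_sum_pmf p n k) by (destruct k; nra).
      assert (Bk1 : bern_sum_pmf p n (S k) = 0) by nra.
      rewrite (IH k Bk Bk1 (S j)) by lia. ring.
    + destruct (Req_dec P 1) as [P1|P1].
      * rewrite P1 in *. destruct k as [|k]; [nra|].
        assert (Bk : 0 < bern_sum_pmf p n k) by nra.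
        assert (Bk1 : bern_sum_pmf p n (S k) = 0) by nra.
        rewrite (IH k Bk Bk1 j) by lia. ring.
      * assert (Bk1 : bern_sum_pmf p n (S k) = 0).
        { apply (Rmult_eq_reg_l (1 - P)); [lra|]. lra. }
        assert (Bk0 : bern_sum_pmf p n k = 0).
        { apply (Rmult_eq_reg_l P); [lra|]. lra. }
        destruct k as [|k]; [nra|].
        assert (Bk : 0 < bern_sum_pmf p n k) by nra.
        rewrite (IH k Bk Bk0 (S j)) by lia. rewrite (IH k Bk Bk0 j) by lia. ring.
Qed.

Lemma bsp_support2 p n : (forall i, (i<n)%nat -> 0 <= p i <= 1) ->
  forall a c, (a < c)%nat -> 0 < bern_sum_pmf p n a -> bern_sum_pmf p n c = 0 ->
  forall j, (c <= j)%nat -> bern_sum_pmf p n j = 0.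
Proof.
  intros Hp a c. induction c as [|c IH]; intros Hac Ha Hc j Hj. lia.
  pose proof (bsp_nonneg p n Hp c) as Hnn.
  destruct (Rle_lt_or_eq_dec 0 _ Hnn) as [Hpos|Hz].
  - apply (bsp_support p n Hp c Hpos Hc). lia.
  - destruct (Nat.eq_dec a c) as [->|Hne]. lra.
    apply IH; auto; lia.
Qed.

Lemma poi_succ i : poisson1_pmf (S i) <= poisson1_pmf i.
Proof.
  unfold poisson1_pmf, Rdiv. apply Rmult_le_compat_l. left; apply exp_pos.
  apply Rinv_le_contravar. apply lt_0_INR, lt_O_fact. apply le_INR. simpl; lia.
Qed.

Lemma poi_1 : poisson1_pmf 1 = poisson1_pmf 0.
Proof. reflexivity. Qed.

Lemma poi_2 : poisson1_pmf 2 = poisson1_pmf 0 / 2.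
Proof. unfold poisson1_pmf. simpl. field. Qed.

Lemma sum_nonpos (g : nat -> R) m : (forall j, (j <= m)%nat -> g j <= 0) -> sum_f_R0 g m <= 0.
Proof.
  induction m as [|m IH]; intros H; simpl. apply H; lia.
  assert (sum_f_R0 g m <= 0) by (apply IH; intros; apply H; lia).
  assert (g (S m) <= 0) by (apply H; lia). lra.
Qed.

Lemma sum_le_last (g : nat -> R) m : (forall j, (j < m)%nat -> g j <= 0) -> sum_f_R0 g m <= g m.
Proof.
  destruct m as [|m]; intros H; simpl. lra.
  assert (sum_f_R0 g m <= 0) by (apply sum_nonpos; intros; apply H; lia). lra.
Qed.

Definition tt (b : nat -> R) (k : nat) : R := sum_f_R0 (fun j => b j * poisson1_pmf (k - j)) k.

Lemma tt_step (b : nat -> R) m : (forall k, 0 <= b k) -> 2 * b (S (S m)) <= b m ->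
  tt b (S (S m)) <= tt b (S m).
Proof.
  intros Hnn Hb. unfold tt.
  change (sum_f_R0 (fun j => b j * poisson1_pmf (S (S m) - j)) (S (S m))) with
    (sum_f_R0 (fun j => b j * poisson1_pmf (S (S m) - j)) m
     + b (S m) * poisson1_pmf (S (S m) - S m) + b (S (S m)) * poisson1_pmf (S (S m) - S (S m))).
  change (sum_f_R0 (fun j => b j * poisson1_pmf (S m - j)) (S m)) with
    (sum_f_R0 (fun j => b j * poisson1_pmf (S m - j)) m
     + b (S m) * poisson1_pmf (S m - S m)).
  replace (S (S m) - S m)%nat with 1%nat by lia.
  replace (S (S m) - S (S m))%nat with 0%nat by lia.
  replace (S m - S m)%nat with 0%nat by lia.
  assert (D : sum_f_R0 (fun j => b j * poisson1_pmf (S (S m) - j)) m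
            - sum_f_R0 (fun j => b j * poisson1_pmf (S m - j)) m
            <= b m * (poisson1_pmf 2 - poisson1_pmf 1)).
  { rewrite <- minus_sum.
    eapply Rle_trans. apply sum_le_last.
    - intros j Hj. cbv beta.
      replace (S (S m) - j)%nat with (S (S m - j)) by lia.
      pose proof (poi_succ (S m - j)). pose proof (Hnn j). nra.
    - cbv beta. replace (S (S m) - m)%nat with 2%nat by lia.
      replace (S m - m)%nat with 1%nat by lia. lra. }
  rewrite poi_2, poi_1 in D. rewrite poi_1.
  assert (0 < poisson1_pmf 0) by (unfold poisson1_pmf; simpl; apply Rdiv_lt_0_compat; [apply exp_pos|lra]).
  nra.
Qed.

Lemma main_abstract (b : nat -> R) m0 m1 :
  (forall k, 0 <= b k) ->
  (forall k, (1 <= k)%nat -> 2 * b (k-1)%nat * b (S k) <= b k * b k) ->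
  (forall a c, (a < c)%nat -> 0 < b a -> b c = 0 -> forall j, (c <= j)%nat -> b j = 0) ->
  (forall k, b k <= b m0) ->
  is_unique_mode (tt b) m1 ->
  (m1 <= m0 + 1)%nat.
Proof.
  intros Hnn HN HZ Hmode [Hm1 Huniq].
  assert (Half : forall k, (m0 <= k)%nat -> 2 * b (S (S k)) <= b k).
  { destruct (Rle_lt_or_eq_dec 0 _ (Hnn m0)) as [Hpos|Hz].
    2:{ intros k _. assert (forall j, b j = 0) as Z.
        { intros j. pose proof (Hmode j); pose proof (Hnn j); lra. }
        rewrite !Z. lra. }
    assert (Dec : forall d, b (S (m0 + d))%nat <= b (m0 + d)%nat).
    { induction d as [|d IH].
      - rewrite Nat.add_0_r. apply Hmode.
      - rewrite Nat.add_succ_r.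
        pose proof (HN (S (m0 + d)) ltac:(lia)) as H.
        replace (S (m0 + d) - 1)%nat with (m0 + d)%nat in H by lia.
        pose proof (Hnn (S (m0 + d))). pose proof (Hnn (S (S (m0 + d)))).
        destruct (Rle_lt_or_eq_dec 0 _ (Hnn (S (m0 + d)))) as [Hp|Hz].
        + nra.
        + rewrite (HZ m0 (S (m0 + d)) ltac:(lia) Hpos (eq_sym Hz) (S (S (m0 + d)))) by lia.
          lra. }
    intros k Hk. replace k with (m0 + (k - m0))%nat by lia.
    set (d := (k - m0)%nat).
    pose proof (HN (S (m0 + d)) ltac:(lia)) as H.
    replace (S (m0 + d) - 1)%nat with (m0 + d)%nat in H by lia.
    pose proof (Dec d). pose proof (Hnn (S (m0 + d))). pose proof (Hnn (S (S (m0 + d)))).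
    destruct (Rle_lt_or_eq_dec 0 _ (Hnn (m0 + d)%nat)) as [Hp|Hz].
    + nra.
    + destruct (Nat.eq_dec m0 (m0 + d)%nat) as [E|E].
      * rewrite <- E in Hz. lra.
      * rewrite (HZ m0 (m0 + d)%nat ltac:(lia) Hpos (eq_sym Hz) (S (S (m0 + d)))) by lia.
        lra. }
  assert (Chain : forall d, tt b (S m0 + d) <= tt b (S m0)).
  { induction d as [|d IH]. rewrite Nat.add_0_r; lra.
    rewrite Nat.add_succ_r. eapply Rle_trans; [|exact IH].
    replace (S m0 + d)%nat with (S (m0 + d)) by lia.
    apply tt_step; auto. apply Half. lia. }
  destruct (le_lt_dec m1 (m0 + 1)) as [Hle|Hlt]; [exact Hle|].
  exfalso.
  assert (Hmode' : is_mode (tt b) (S m0)).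
  { intros k. eapply Rle_trans. apply Hm1.
    replace m1 with (S m0 + (m1 - S m0))%nat by lia. apply Chain. }
  specialize (Huniq _ Hmode'). lia.
Qed.

Theorem mainTheorem6 (n : nat) (p : nat -> R) (m0 m1 : nat) :
  (1 <= n <= 5)%nat ->
  (forall i : nat, (i < n)%nat -> 0 <= p i <= 1) ->
  is_unique_mode (bern_sum_poisson_pmf p n) m1 ->
  is_mode (bern_sum_pmf p n) m0 ->
  (m1 <= m0 + 1)%nat.
Proof.
  intros Hn Hp Hu Hm.
  apply (main_abstract (bern_sum_pmf p n) m0 m1).
  - apply bsp_nonneg; exact Hp.
  - intros k Hk. apply newton_bsp; lia.
  - intros a c Hac Ha Hc j Hj. exact (bsp_support2 p n Hp a c Hac Ha Hc j Hj).
  - exact Hm.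
  - exact Hu.
Qed.
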